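(* For each $n\in\mathbb{N}$ let $L_n\in\{n-1,n\}$ and let $S_{\mathbf{a}^n}$ be a linear binary subdivision scheme of the form \[ (S_{\mathbf{a}^n} \mathbf{f})_{2j} = \sum_{l=1-n}^{L_n} a^{n,0}_{l} f_{j+l}, \qquad (S_{\mathbf{a}^n} \mathbf{f})_{2j + 1} = \sum_{l=1-n}^{L_n+1} a^{n,1}_{l} f_{j+l}, \qquad j\in\mathbb{Z}, \] which is odd-symmetric, i.e. $a^{n,0}_l=a^{n,0}_{L_n+1-n-l}$ for $l=1-n,\ldots,L_n$ and $a^{n,1}_l=a^{n,1}_{L_n+2-n-l}$ for $l=1-n,\ldots,L_n+1$, and which reproduces constants: $\sum_{l} a^{n,0}_l=\sum_{l} a^{n,1}_l=1$. Let $r:[-1,1]\to\mathbb{R}$ be $\mathcal{C}^1$, $R(t):=\int_{-1}^t r(s)\,ds$, and assume there are $\alpha>2$, $\mu>0$ such that for all $n$ and all $j=1-n,\ldots,L_n$, \[ a^{n,0}_{j} - a^{n,1}_{j} = r(j/n)\,n^{-2} + \varepsilon^n_j, \qquad |\varepsilon^n_j| \leq \mu n^{-\alpha}, \] and $\int_{-1}^1|R(t)|\,dt<1$. Then there exists $n_0$ such that $S_{\mathbf{a}^n}$ is (uniformly) convergent for every $n>n_0$. If moreover $\alpha=3$, one may take, with $\|R\|_1=\int_{-1}^1|R|$, $\|r\|_\infty=\max_{[-1,1]}|r|$, $\|r'\|_\infty=\max_{[-1,1]}|r'|$ and $B=\|r\|_\infty+2(\mu+\|r'\|_\infty)$, \[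 n_0=\frac{\sqrt{B^2+4(\|R\|_1-1)(\mu+\|r'\|_\infty)}+B}{2(1-\|R\|_1)} \ \text{ if } L_n=n-1, \qquad n_0=\frac{\sqrt{B^2+4(1-\|R\|_1)\mu}+B}{2(1-\|R\|_1)} \ \text{ if } L_n=n. \]
   Context: A subdivision scheme $S$ is (uniformly) convergent if for every bounded real sequence $\mathbf{f}^0$ there is a continuous $F:\mathbb{R}\to\mathbb{R}$ with $\lim_{k\to\infty}\sup_{j\in\mathbb{Z}}|(S^k\mathbf{f}^0)_j-F(2^{-k}j)|=0$. *)

(* Defs.v *)
From Stdlib Require Import Reals ZArith List Lra Lia.
From Coquelicot Require Import Coquelicot.
Open Scope R_scope.

(* sumZ lo hi g = sum_{l = lo}^{hi} g l  (empty if hi < lo) *)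
Definition sumZ (lo hi : Z) (g : Z -> R) : R :=
  fold_right Rplus 0
    (map (fun k : nat => g (lo + Z.of_nat k)%Z) (seq 0 (Z.to_nat (hi - lo + 1)))).

Definition subdiv (lo hi0 hi1 : Z) (a0 a1 : Z -> R) (f : Z -> R) : Z -> R :=
  fun i : Z =>
    if Z.even i
    then sumZ lo hi0 (fun l => a0 l * f (Z.div i 2 + l)%Z)
    else sumZ lo hi1 (fun l => a1 l * f (Z.div i 2 + l)%Z).

Definition bounded_seq (f : Z -> R) : Prop :=
  exists M : R, forall j : Z, Rabs (f j) <= M.

Definition convergent_scheme (S : (Z -> R) -> (Z -> R)) : Prop :=
  forall f0 : Z -> R, bounded_seq f0 ->
    exists F : R -> R, continuity F /\
      forall eps : R, 0 < eps -> exists K : nat, forall k : nat, (K <= k)%nat ->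
        forall j : Z, Rabs (Nat.iter k S f0 j - F (IZR j / 2 ^ k)) <= eps.

Definition in_I (x : R) : Prop := -1 <= x <= 1.

Definition has_deriv_within (D : R -> Prop) (f : R -> R) (x l : R) : Prop :=
  forall eps : R, 0 < eps -> exists delta : R, 0 < delta /\
    forall y : R, D y -> Rabs (y - x) < delta ->
      Rabs (f y - f x - l * (y - x)) <= eps * Rabs (y - x).

Definition continuous_within (D : R -> Prop) (f : R -> R) (x : R) : Prop :=
  forall eps : R, 0 < eps -> exists delta : R, 0 < delta /\
    forall y : R, D y -> Rabs (y - x) < delta -> Rabs (f y - f x) <= eps.

Definition C1_on_I (r dr : R -> R) : Prop :=
  (forall x, in_I x -> has_deriv_within in_I r x (dr x)) /\
  (forall x, in_I x -> continuous_within in_I dr x).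

Definition is_max_abs_on_I (g : R -> R) (m : R) : Prop :=
  (exists x, in_I x /\ Rabs (g x) = m) /\ (forall x, in_I x -> Rabs (g x) <= m).

(* Main.v *)
Require Import Defs.
From Stdlib Require Import Reals ZArith List Lra Lia.
From Coquelicot Require Import Coquelicot.
Open Scope R_scope.

Fixpoint sumN (N : nat) (h : nat -> R) : R :=
  match N with O => 0 | S N' => sumN N' h + h N' end.

Lemma fold_plus_shift (l : list R) (a : R) :
  fold_right Rplus a l = a + fold_right Rplus 0 l.
Proof. induction l; simpl; [lra|rewrite IHl; lra]. Qed.

Lemma fold_seq (N : nat) (h : nat -> R) :
  fold_right Rplus 0 (map h (seq 0 N)) = sumN N h.
Proof.
  induction N. reflexivity.
  rewrite seq_S, map_app, fold_right_app. simpl fold_right.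
  rewrite fold_plus_shift, IHN. simpl. lra.
Qed.

Lemma sumZ_N (lo hi : Z) (g : Z -> R) :
  sumZ lo hi g = sumN (Z.to_nat (hi - lo + 1)) (fun k => g (lo + Z.of_nat k)%Z).
Proof. unfold sumZ. apply fold_seq. Qed.

Lemma sumN_ext N h1 h2 : (forall k, (k < N)%nat -> h1 k = h2 k) -> sumN N h1 = sumN N h2.
Proof. induction N; simpl; intros; auto. rewrite IHN, H; auto. Qed.

Lemma sumN_plus N h1 h2 : sumN N (fun k => h1 k + h2 k) = sumN N h1 + sumN N h2.
Proof. induction N; simpl; lra. Qed.

Lemma sumN_minus N h1 h2 : sumN N (fun k => h1 k - h2 k) = sumN N h1 - sumN N h2.
Proof. induction N; simpl; lra. Qed.

Lemma sumN_scal N c h : sumN N (fun k => c * h k) = c * sumN N h.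
Proof. induction N; simpl; lra. Qed.

Lemma sumN_const N c : sumN N (fun _ => c) = INR N * c.
Proof. induction N; simpl sumN. simpl; lra. rewrite S_INR. lra. Qed.

Lemma sumN_abs N h : Rabs (sumN N h) <= sumN N (fun k => Rabs (h k)).
Proof. induction N; simpl. rewrite Rabs_R0; lra.
  eapply Rle_trans. apply Rabs_triang. lra. Qed.

Lemma sumN_le N h1 h2 : (forall k, (k < N)%nat -> h1 k <= h2 k) -> sumN N h1 <= sumN N h2.
Proof. induction N; simpl; intros. lra. assert (h1 N <= h2 N) by auto.
  assert (sumN N h1 <= sumN N h2) by auto. lra. Qed.

Lemma sumN_shift N h : sumN (S N) h = h O + sumN N (fun k => h (S k)).
Proof. induction N. simpl; lra. change (sumN (S (S N)) h) with (sumN (S N) h + h (S N)).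
  rewrite IHN. simpl. lra. Qed.

Lemma sumN_rev N h : sumN N h = sumN N (fun k => h (N - 1 - k)%nat).
Proof. induction N. reflexivity.
  rewrite (sumN_shift N (fun k => h (S N - 1 - k)%nat)). change (sumN (S N) h) with (sumN N h + h N). rewrite IHN.
  replace (h (S N - 1 - 0)%nat) with (h N) by (f_equal; lia).
  rewrite Rplus_comm. f_equal. apply sumN_ext. intros; f_equal; lia. Qed.

Lemma sumN_id N : sumN N (fun k => INR (S k)) = INR N * (INR N + 1) / 2.
Proof. induction N. simpl; lra. change (sumN (S N) (fun k => INR (S k))) with (sumN N (fun k => INR (S k)) + INR (S N)). rewrite IHN. rewrite S_INR. lra. Qed.

Lemma sumN_nonneg N h : (forall k, (k < N)%nat -> 0 <= h k) -> 0 <= sumN N h.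
Proof. intros H. apply Rle_trans with (sumN N (fun _ => 0)).
  rewrite sumN_const; lra. apply sumN_le; auto. Qed.


Definition fl (x : R) : Z := (up x - 1)%Z.

Lemma fl_spec x : IZR (fl x) <= x < IZR (fl x) + 1.
Proof. unfold fl. destruct (archimed x). rewrite minus_IZR. lra. Qed.

Lemma fl_unique x z : IZR z <= x < IZR z + 1 -> fl x = z.
Proof. intros [H1 H2]. destruct (fl_spec x) as [H3 H4].
  assert (IZR z < IZR (fl x + 1)) by (rewrite plus_IZR; lra).
  assert (IZR (fl x) < IZR (z + 1)) by (rewrite plus_IZR; lra).
  apply lt_IZR in H. apply lt_IZR in H0. lia. Qed.

Lemma fl_IZR z : fl (IZR z) = z.
Proof. apply fl_unique. lra. Qed.

Lemma fl_half x : Z.div (fl (2 * x)) 2 = fl x.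
Proof.
  symmetry. apply fl_unique. set (p := fl (2*x)). destruct (fl_spec (2*x)) as [H1 H2].
  fold p in H1, H2.
  assert (Hp : p = (2 * (p / 2) + p mod 2)%Z) by (apply Z.div_mod; lia).
  assert (Hm : (0 <= p mod 2 < 2)%Z) by (apply Z.mod_pos_bound; lia).
  assert (E : IZR p = 2 * IZR (p/2) + IZR (p mod 2)).
  { rewrite Hp at 1. rewrite plus_IZR, mult_IZR. reflexivity. }
  assert (0 <= IZR (p mod 2) <= 1).
  { split; apply IZR_le; lia. }
  lra.
Qed.

Lemma fl_close x y : Rabs (x - y) < 1 -> (Z.abs (fl x - fl y) <= 1)%Z.
Proof. intros H. destruct (fl_spec x), (fl_spec y).
  apply Rabs_def2 in H. destruct H.
  assert (IZR (fl x) < IZR (fl y + 2)) by (rewrite plus_IZR; lra).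
  assert (IZR (fl y) < IZR (fl x + 2)) by (rewrite plus_IZR; lra).
  apply lt_IZR in H5. apply lt_IZR in H6. lia. Qed.

Lemma diff_bound_nat (f : Z -> R) d q (m : nat) :
  (forall i, Rabs (f (i+1)%Z - f i) <= d) ->
  Rabs (f (q + Z.of_nat m)%Z - f q) <= INR m * d.
Proof. intros H. induction m. simpl. replace (q+0)%Z with q by lia.
  unfold Rminus. rewrite Rplus_opp_r, Rabs_R0. lra.
  rewrite S_INR. replace (q + Z.of_nat (S m))%Z with ((q + Z.of_nat m) + 1)%Z by lia.
  assert (Rabs (f (q + Z.of_nat m + 1)%Z - f (q + Z.of_nat m)%Z) <= d) by auto.
  replace (f (q + Z.of_nat m + 1)%Z - f q) with ((f (q + Z.of_nat m + 1)%Z - f (q + Z.of_nat m)%Z) + (f (q + Z.of_nat m)%Z - f q)) by ring.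
  eapply Rle_trans. apply Rabs_triang. lra. Qed.

Lemma diff_bound (f : Z -> R) d q (m : Z) :
  (forall i, Rabs (f (i+1)%Z - f i) <= d) ->
  Rabs (f (q + m)%Z - f q) <= IZR (Z.abs m) * d.
Proof. intros H. destruct (Z_le_gt_dec 0 m).
  - rewrite <- (Z2Nat.id m) by lia. rewrite Z.abs_eq by lia. rewrite <- INR_IZR_INZ.
    rewrite Z2Nat.id by lia. rewrite <- (Z2Nat.id m) at 1 by lia. apply diff_bound_nat; auto.
  - pose proof (diff_bound_nat f d (q + m) (Z.to_nat (- m)) H).
    rewrite Z2Nat.id in H0 by lia. replace (q + m + - m)%Z with q in H0 by lia.
    rewrite Rabs_minus_sym. rewrite INR_IZR_INZ, Z2Nat.id in H0 by lia.
    rewrite Z.abs_neq by lia. auto. Qed.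

Lemma pow_small g e : 0 <= g < 1 -> 0 < e -> exists K : nat, forall k, (K <= k)%nat -> g ^ k < e.
Proof. intros Hg He. destruct (pow_lt_1_zero g) with (y := e) as [K HK]. rewrite Rabs_pos_eq; lra. auto.
  exists K. intros k Hk. specialize (HK k Hk). rewrite Rabs_pos_eq in HK; auto. apply pow_le; lra. Qed.

Section Gen.
Variable Sc : (Z -> R) -> (Z -> R).
Variables g C : R.
Hypothesis Hg : 0 <= g < 1.
Hypothesis HC : 0 <= C.
Hypothesis H1 : forall f d, (forall i, Rabs (f (i+1)%Z - f i) <= d) ->
   forall i, Rabs (Sc f (i+1)%Z - Sc f i) <= g * d.
Hypothesis H2 : forall f d, (forall i, Rabs (f (i+1)%Z - f i) <= d) ->
   forall i, Rabs (Sc f i - f (Z.div i 2)) <= C * d.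

Lemma conv_generic : convergent_scheme Sc.
Proof.
  intros f0 [M HM].
  set (d0 := 2 * M).
  assert (HM0 : 0 <= M) by (eapply Rle_trans; [apply Rabs_pos|apply (HM 0%Z)]).
  assert (Hd0 : forall i, Rabs (f0 (i+1)%Z - f0 i) <= d0).
  { intros i. unfold d0. eapply Rle_trans. unfold Rminus. apply Rabs_triang.
    rewrite Rabs_Ropp. pose proof (HM (i+1)%Z). pose proof (HM i). lra. }
  set (fk := fun k => Nat.iter k Sc f0).
  assert (Hdk : forall k i, Rabs (fk k (i+1)%Z - fk k i) <= g ^ k * d0).
  { induction k; intros i. simpl. rewrite Rmult_1_l. apply Hd0.
    simpl. rewrite Rmult_assoc. apply H1. apply IHk. }
  set (G := fun k x => fk k (fl (2 ^ k * x))).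
  assert (HG1 : forall k x, Rabs (G (S k) x - G k x) <= C * d0 * g ^ k).
  { intros k x. unfold G. replace (2 ^ S k * x) with (2 * (2 ^ k * x)) by (simpl; ring).
    rewrite <- (fl_half (2^k*x)). simpl (fk (S k)). replace (C * d0 * g^k) with (C * (g^k * d0)) by ring.
    apply H2. apply Hdk. }
  set (T := C * d0 / (1 - g)).
  assert (HT : 0 <= T). { unfold T. apply Rmult_le_pos. apply Rmult_le_pos; unfold d0; lra.
     left; apply Rinv_0_lt_compat; lra. }
  assert (HGp : forall k p x, Rabs (G (k + p)%nat x - G k x) <= T * g ^ k * (1 - g ^ p)).
  { intros k p x. induction p. rewrite Nat.add_0_r. unfold Rminus. rewrite Rplus_opp_r, Rabs_R0. simpl; lra.
    replace (k + S p)%nat with (S (k + p)) by lia.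
    eapply Rle_trans. replace (G (S (k+p)) x - G k x) with ((G (S (k+p)) x - G (k+p)%nat x) + (G (k+p)%nat x - G k x)) by ring.
    apply Rabs_triang. eapply Rle_trans. apply Rplus_le_compat. apply HG1. apply IHp.
    rewrite pow_add. unfold T. right. simpl. field. lra. }
  assert (HGp' : forall k m x, (k <= m)%nat -> Rabs (G m x - G k x) <= T * g ^ k).
  { intros k m x Hkm. replace m with (k + (m - k))%nat by lia. eapply Rle_trans. apply HGp.
    assert (0 <= g ^ (m - k)) by (apply pow_le; lra).
    assert (0 <= T * g ^ k) by (apply Rmult_le_pos; [auto|apply pow_le; lra]). nra. }
  assert (Hcauchy : forall x, ex_finite_lim_seq (fun k => G k x)).
  { intros x. apply ex_lim_seq_cauchy_corr. intros [e He]. simpl.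
    destruct (pow_small g (e / (2 * T + 1)) Hg) as [K HK]. apply Rdiv_lt_0_compat; lra.
    exists K. intros n m Hn Hm.
    specialize (HK K (le_n K)).
    assert (g ^ K * (2 * T + 1) < e).
    { apply (Rmult_lt_compat_r (2*T+1)) in HK; [|lra]. unfold Rdiv in HK.
      rewrite Rmult_assoc, Rinv_l, Rmult_1_r in HK; lra. }
    assert (0 <= g ^ K) by (apply pow_le; lra).
    replace (G n x - G m x) with ((G n x - G K x) - (G m x - G K x)) by ring.
    eapply Rle_lt_trans. unfold Rminus at 1. apply Rabs_triang. rewrite Rabs_Ropp.
    pose proof (HGp' K n x Hn). pose proof (HGp' K m x Hm). nra. }
  set (F := fun x => real (Lim_seq (fun k => G k x))).
  assert (HF : forall x, is_lim_seq (fun k => G k x) (F x)).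
  { intros x. unfold F. apply Lim_seq_correct'. auto. }
  assert (HGF : forall k x, Rabs (G k x - F x) <= T * g ^ k).
  { intros k x. apply Rle_plus_epsilon. intros e He.
    pose proof (HF x) as Hl. apply is_lim_seq_spec in Hl. destruct (Hl (mkposreal e He)) as [N HN].
    simpl in HN. specialize (HN (max N k) (Nat.le_max_l _ _)).
    replace (G k x - F x) with ((G k x - G (max N k) x) + (G (max N k) x - F x)) by ring.
    eapply Rle_trans. apply Rabs_triang. rewrite Rabs_minus_sym.
    pose proof (HGp' k (max N k) x (Nat.le_max_r _ _)). lra. }
  exists F. split.
  - intros x. unfold continuity_pt, continue_in, limit1_in, limit_in. simpl. unfold R_dist.
    intros e He.
    destruct (pow_small g (e / (2 * T + d0 + 1)) Hg) as [K HK]. apply Rdiv_lt_0_compat; unfold d0 in *; lra.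
    specialize (HK K (le_n K)).
    assert (g ^ K * (2 * T + d0 + 1) < e).
    { apply (Rmult_lt_compat_r (2*T+d0+1)) in HK; [|unfold d0; lra]. unfold Rdiv in HK.
      rewrite Rmult_assoc, Rinv_l, Rmult_1_r in HK; unfold d0 in *; lra. }
    assert (0 <= g ^ K) by (apply pow_le; lra).
    assert (H2K : 0 < 2 ^ K) by (apply pow_lt; lra).
    exists (/ 2 ^ K). split. apply Rinv_0_lt_compat; auto.
    intros y [_ Hy].
    assert (Hc : Rabs (G K y - G K x) <= g ^ K * d0).
    { unfold G. assert (Rabs (2^K * y - 2^K * x) < 1).
      { rewrite <- Rmult_minus_distr_l, Rabs_mult, Rabs_pos_eq by lra.
        apply (Rmult_lt_compat_l (2^K)) in Hy; auto. rewrite Rinv_r in Hy; lra. }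
      apply fl_close in H3.
      destruct (Z.eq_dec (fl (2^K*y)) (fl (2^K*x))) as [E|E].
      - rewrite E. unfold Rminus. rewrite Rplus_opp_r, Rabs_R0. unfold d0. nra.
      - destruct (Z_le_gt_dec (fl (2^K*y)) (fl (2^K*x))).
        + replace (fl (2^K*x)) with (fl (2^K*y) + 1)%Z by lia. rewrite Rabs_minus_sym. apply Hdk.
        + replace (fl (2^K*y)) with (fl (2^K*x) + 1)%Z by lia. apply Hdk. }
    replace (F y - F x) with (-(G K y - F y) + (G K y - G K x) + (G K x - F x)) by ring.
    eapply Rle_lt_trans. eapply Rle_trans. apply Rabs_triang. apply Rplus_le_compat_r. apply Rabs_triang.
    rewrite Rabs_Ropp. pose proof (HGF K y). pose proof (HGF K x). nra.
  - intros e He.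
    destruct (pow_small g (e / (T + 1)) Hg) as [K HK]. apply Rdiv_lt_0_compat; lra.
    exists K. intros k Hk j.
    specialize (HK k Hk).
    assert (g ^ k * (T + 1) < e).
    { apply (Rmult_lt_compat_r (T+1)) in HK; [|lra]. unfold Rdiv in HK.
      rewrite Rmult_assoc, Rinv_l, Rmult_1_r in HK; lra. }
    assert (0 <= g ^ k) by (apply pow_le; lra).
    assert (E : Nat.iter k Sc f0 j = G k (IZR j / 2 ^ k)).
    { unfold G. replace (2 ^ k * (IZR j / 2 ^ k)) with (IZR j). rewrite fl_IZR. reflexivity.
      field. apply pow_nonzero. lra. }
    rewrite E. eapply Rle_trans. apply HGF. nra.
Qed.
End Gen.


Lemma abel (N : nat) (A0 A1 g : nat -> R) :
  sumN (S N) (fun k => A1 k * g k) - sumN N (fun k => A0 k * g k) =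
  (sumN (S N) A1 - sumN N A0) * g N +
  sumN N (fun k => sumN (S k) (fun j => A0 j - A1 j) * (g (S k) - g k)).
Proof.
  induction N.
  - simpl. ring.
  - change (sumN (S (S N)) (fun k => A1 k * g k)) with (sumN (S N) (fun k => A1 k * g k) + A1 (S N) * g (S N)).
    change (sumN (S N) (fun k => A0 k * g k)) with (sumN N (fun k => A0 k * g k) + A0 N * g N).
    change (sumN (S (S N)) A1) with (sumN (S N) A1 + A1 (S N)).
    change (sumN (S N) A0) with (sumN N A0 + A0 N).
    change (sumN (S N) (fun k => sumN (S k) (fun j => A0 j - A1 j) * (g (S k) - g k)))
      with (sumN N (fun k => sumN (S k) (fun j => A0 j - A1 j) * (g (S k) - g k)) +
            sumN (S N) (fun j => A0 j - A1 j) * (g (S N) - g N)).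
    rewrite sumN_minus.
    change (sumN (S N) A0) with (sumN N A0 + A0 N).
    assert (E := IHN). lra.
Qed.

Lemma abel_bound (N : nat) (A0 A1 g : nat -> R) d :
  sumN (S N) A1 = 1 -> sumN N A0 = 1 ->
  (forall k, (k < N)%nat -> Rabs (g (S k) - g k) <= d) ->
  Rabs (sumN (S N) (fun k => A1 k * g k) - sumN N (fun k => A0 k * g k)) <=
  sumN N (fun k => Rabs (sumN (S k) (fun j => A0 j - A1 j))) * d.
Proof.
  intros H1 H0 Hg. rewrite abel, H1, H0. rewrite Rminus_diag, Rmult_0_l, Rplus_0_l.
  eapply Rle_trans. apply sumN_abs. rewrite Rmult_comm, <- sumN_scal.
  apply sumN_le. intros k Hk. rewrite Rabs_mult. rewrite Rmult_comm.
  apply Rmult_le_compat_r. apply Rabs_pos. auto.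
Qed.

Lemma subdiv_even lo hi0 hi1 a0 a1 f q :
  subdiv lo hi0 hi1 a0 a1 f (2 * q)%Z = sumZ lo hi0 (fun l => a0 l * f (q + l)%Z).
Proof. unfold subdiv. rewrite Z.even_mul. change (Z.even 2) with true. rewrite Bool.orb_true_l.
  replace (2 * q / 2)%Z with q. reflexivity. rewrite Z.mul_comm, Z.div_mul; lia. Qed.

Lemma subdiv_odd lo hi0 hi1 a0 a1 f q :
  subdiv lo hi0 hi1 a0 a1 f (2 * q + 1)%Z = sumZ lo hi1 (fun l => a1 l * f (q + l)%Z).
Proof. unfold subdiv. rewrite Z.even_add, Z.even_mul. change (Z.even 2) with true. rewrite Bool.orb_true_l.
  change (Z.even 1) with false. simpl Bool.eqb. cbv iota.
  replace ((2 * q + 1) / 2)%Z with q. reflexivity.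
  rewrite Z.mul_comm, Z.div_add_l by lia. change (1/2)%Z with 0%Z. lia. Qed.

Lemma Z_parity (i : Z) : exists q, i = (2 * q)%Z \/ i = (2 * q + 1)%Z.
Proof. exists (i / 2)%Z. pose proof (Z.div_mod i 2). pose proof (Z.mod_pos_bound i 2).
  lia. Qed.

Lemma const_sum N (A : nat -> R) c : sumN N A = 1 -> sumN N (fun k => A k * c) = c.
Proof. intros H. rewrite (sumN_ext N _ (fun k => c * A k)) by (intros; ring).
  rewrite sumN_scal, H. ring. Qed.

Section Scheme.
Variables (lo hi : Z) (N : nat) (a0 a1 : Z -> R).
Hypothesis HN : (1 <= N)%nat.
Hypothesis Hhi : hi = (lo + Z.of_nat N - 1)%Z.
Let A0 k := a0 (lo + Z.of_nat k)%Z.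
Let A1 k := a1 (lo + Z.of_nat k)%Z.
Hypothesis Hs0 : sumN N A0 = 1.
Hypothesis Hs1 : sumN (S N) A1 = 1.
Hypothesis Hy0 : forall k, (k < N)%nat -> A0 (N - 1 - k)%nat = A0 k.
Hypothesis Hy1 : forall k, (k <= N)%nat -> A1 (N - k)%nat = A1 k.
Hypothesis Hgam : sumN N (fun k => Rabs (sumN (S k) (fun j => A0 j - A1 j))) < 1.

Lemma sumZ0 g : sumZ lo hi g = sumN N (fun k => g (lo + Z.of_nat k)%Z).
Proof. rewrite sumZ_N. f_equal. lia. Qed.
Lemma sumZ1 g : sumZ lo (hi + 1) g = sumN (S N) (fun k => g (lo + Z.of_nat k)%Z).
Proof. rewrite sumZ_N. f_equal. lia. Qed.

Lemma scheme_conv : convergent_scheme (subdiv lo hi (hi + 1) a0 a1).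
Proof.
  set (gam := sumN N (fun k => Rabs (sumN (S k) (fun j => A0 j - A1 j)))).
  set (C := sumN N (fun k => Rabs (A0 k) * IZR (Z.abs (lo + Z.of_nat k))) +
            sumN (S N) (fun k => Rabs (A1 k) * IZR (Z.abs (lo + Z.of_nat k)))).
  assert (Hg0 : 0 <= gam). { unfold gam. apply sumN_nonneg. intros; apply Rabs_pos. }
  assert (HC : 0 <= C).
  { unfold C. 
    apply Rplus_le_le_0_compat; apply sumN_nonneg; intros; apply Rmult_le_pos; try apply Rabs_pos;
    apply IZR_le; lia. }
  apply (conv_generic _ gam C); auto.
  - intros f d Hd i. destruct (Z_parity i) as [q [E|E]]; subst i.
    + rewrite subdiv_odd, subdiv_even, sumZ0, sumZ1.
      set (g := fun k : nat => f (q + (lo + Z.of_nat k))%Z).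
      rewrite (sumN_ext N _ (fun k => A0 k * g k)) by reflexivity.
      rewrite (sumN_ext (S N) _ (fun k => A1 k * g k)) by reflexivity.
      apply abel_bound; auto. intros k Hk. unfold g.
      replace (q + (lo + Z.of_nat (S k)))%Z with ((q + (lo + Z.of_nat k)) + 1)%Z by lia. auto.
    + replace (2 * q + 1 + 1)%Z with (2 * (q + 1))%Z by lia.
      rewrite subdiv_odd, subdiv_even, sumZ0, sumZ1.
      set (h := fun k : nat => f (q + lo + Z.of_nat N - Z.of_nat k)%Z).
      rewrite sumN_rev. rewrite (sumN_rev (S N)).
      rewrite (sumN_ext N _ (fun k => A0 k * h k)).
      2: { intros k Hk. rewrite <- Hy0 by auto. unfold A0, h. f_equal. f_equal. lia. }
      rewrite (sumN_ext (S N) _ (fun k => A1 k * h k)).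
      2: { intros k Hk. replace (S N - 1 - k)%nat with (N - k)%nat by lia.
           rewrite <- (Hy1 k) by lia. unfold A1, h. f_equal. f_equal. lia. }
      rewrite <- Rabs_Ropp. rewrite Ropp_minus_distr.
      apply abel_bound; auto. intros k Hk. unfold h.
      replace (q + lo + Z.of_nat N - Z.of_nat k)%Z with ((q + lo + Z.of_nat N - Z.of_nat (S k)) + 1)%Z by lia.
      rewrite Rabs_minus_sym. auto.
  - intros f d Hd i.
    assert (Hd0 : 0 <= d) by (eapply Rle_trans; [apply Rabs_pos|apply (Hd 0%Z)]).
    assert (Hb : forall M (A : nat -> R) q, sumN M A = 1 ->
       Rabs (sumN M (fun k => A k * f (q + (lo + Z.of_nat k))%Z) - f q) <=
       sumN M (fun k => Rabs (A k) * IZR (Z.abs (lo + Z.of_nat k))) * d).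
    { intros M A q HA. rewrite <- (const_sum M A (f q)) by auto.
      rewrite <- sumN_minus. eapply Rle_trans. apply sumN_abs.
      rewrite Rmult_comm, <- sumN_scal. apply sumN_le. intros k Hk.
      rewrite <- Rmult_minus_distr_l, Rabs_mult.
      replace (d * (Rabs (A k) * IZR (Z.abs (lo + Z.of_nat k)))) with (Rabs (A k) * (IZR (Z.abs (lo + Z.of_nat k)) * d)) by ring.
      apply Rmult_le_compat_l. apply Rabs_pos. apply diff_bound; auto. }
    assert (P0 : 0 <= sumN N (fun k => Rabs (A0 k) * IZR (Z.abs (lo + Z.of_nat k)))).
    { apply sumN_nonneg. intros; apply Rmult_le_pos; [apply Rabs_pos|apply IZR_le; lia]. }
    assert (P1 : 0 <= sumN (S N) (fun k => Rabs (A1 k) * IZR (Z.abs (lo + Z.of_nat k)))).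
    { apply sumN_nonneg. intros; apply Rmult_le_pos; [apply Rabs_pos|apply IZR_le; lia]. }
    destruct (Z_parity i) as [q [E|E]]; subst i.
    + rewrite subdiv_even, sumZ0. replace (2 * q / 2)%Z with q by (rewrite Z.mul_comm, Z.div_mul; lia).
      eapply Rle_trans. apply (Hb N A0 q Hs0). unfold C. nra.
    + rewrite subdiv_odd, sumZ1. replace ((2 * q + 1) / 2)%Z with q
        by (rewrite Z.mul_comm, Z.div_add_l by lia; change (1/2)%Z with 0%Z; lia).
      eapply Rle_trans. apply (Hb (S N) A1 q Hs1). unfold C. nra.
Qed.
End Scheme.


Definition cl (x : R) : R := Rmax (-1) (Rmin 1 x).

Lemma cl_in x : in_I (cl x).
Proof. unfold cl, in_I, Rmax, Rmin. repeat destruct Rle_dec; lra. Qed.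
Lemma cl_id x : in_I x -> cl x = x.
Proof. unfold cl, in_I, Rmax, Rmin. repeat destruct Rle_dec; lra. Qed.
Lemma cl_lip x y : Rabs (cl x - cl y) <= Rabs (x - y).
Proof. unfold cl, Rmax, Rmin. repeat destruct Rle_dec; unfold Rabs; repeat destruct Rcase_abs; lra. Qed.

Definition Lip (g : R -> R) (K : R) := forall x y, Rabs (g x - g y) <= K * Rabs (x - y).

Lemma lip_cont g K : 0 <= K -> Lip g K -> forall x, continuous g x.
Proof. intros HK H x. apply continuity_pt_filterlim.
  unfold continuity_pt, continue_in, limit1_in, limit_in. simpl. unfold R_dist.
  intros e He. exists (e / (K + 1)). split. apply Rdiv_lt_0_compat; lra.
  intros y [_ Hy]. eapply Rle_lt_trans. apply H.
  apply Rle_lt_trans with (K * (e / (K+1))). apply Rmult_le_compat_l; lra.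
  apply Rlt_le_trans with ((K+1) * (e/(K+1))). apply Rmult_lt_compat_r. apply Rdiv_lt_0_compat; lra. lra.
  right. field. lra. Qed.

Lemma lip_RInt g K a b : 0 <= K -> Lip g K -> ex_RInt g a b.
Proof. intros. apply (ex_RInt_continuous (V:=R_CompleteNormedModule)). intros. eapply lip_cont; eauto. Qed.

Lemma lip_abs g K : Lip g K -> Lip (fun x => Rabs (g x)) K.
Proof. intros H x y. eapply Rle_trans. apply Rabs_triang_inv2. apply H. Qed.

Lemma lip_cminus g K c : Lip g K -> Lip (fun x => c - g x) K.
Proof. intros H x y. replace (c - g x - (c - g y)) with (-(g x - g y)) by ring.
  rewrite Rabs_Ropp. apply H. Qed.

Lemma RInt_lin K a b : a <= b -> RInt (fun s => K * (b - s)) a b = K * (b - a)^2 / 2.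
Proof. intros Hab. apply is_RInt_unique.
  replace (K * (b - a)^2/2) with (minus ((fun s => - K * (b - s)^2/2) b) ((fun s => - K * (b - s)^2/2) a))
   by (unfold minus, plus, opp; simpl; field).
  refine (is_RInt_derive (V:=R_CompleteNormedModule) (fun s => - K * (b - s)^2/2) (fun s => K*(b-s)) a b _ _).
  - intros x _. auto_derive. auto. field.
  - intros x _. apply (lip_cont _ (Rabs K)). apply Rabs_pos. intros u v.
    replace (K * (b - u) - K * (b - v)) with (- K * (u - v)) by ring.
    rewrite Rabs_mult, Rabs_Ropp. lra.
Qed.

Lemma cell g K a b : 0 <= K -> a <= b -> Lip g K ->
  Rabs ((b - a) * g b - RInt g a b) <= K * (b - a)^2 / 2.
Proof.
  intros HK Hab Hg.
  assert (E : (b - a) * g b - RInt g a b = RInt (fun s => g b - g s) a b).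
  { symmetry. apply is_RInt_unique.
    apply (is_RInt_minus (V:=R_CompleteNormedModule) (fun _ => g b) g a b). apply (is_RInt_const (V:=R_CompleteNormedModule)). apply (RInt_correct (V:=R_CompleteNormedModule)).
    eapply lip_RInt; eauto. }
  rewrite E. eapply Rle_trans. apply abs_RInt_le. auto.
  eapply lip_RInt. apply HK. apply lip_cminus. auto.
  rewrite <- RInt_lin by auto. apply RInt_le. auto.
  eapply lip_RInt. apply HK. apply lip_abs, lip_cminus. auto.
  apply (lip_RInt _ (Rabs K)). apply Rabs_pos. intros u v.
    replace (K * (b - u) - K * (b - v)) with (- K * (u - v)) by ring.
    rewrite Rabs_mult, Rabs_Ropp. lra.
  intros x Hx. replace (K * (b - x)) with (K * Rabs (b - x)). apply Hg.
  rewrite Rabs_pos_eq; lra.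
Qed.

Definition xg (n j : nat) : R := -1 + INR j / INR n.

Lemma riem g K (n : nat) p : 0 <= K -> (1 <= n)%nat -> Lip g K ->
  Rabs (sumN p (fun j => g (xg n (S j)) / INR n) - RInt g (-1) (xg n p)) <= INR p * K / (2 * INR n ^ 2).
Proof.
  intros HK Hn Hg. assert (Hn' : 1 <= INR n) by (apply (le_INR 1); auto).
  induction p.
  - simpl. unfold xg. replace (-1 + INR 0 / INR n) with (-1) by (simpl; field; lra).
    rewrite RInt_point. unfold zero; simpl. rewrite Rminus_0_r, Rabs_R0. lra.
  - simpl sumN. rewrite <- (RInt_Chasles g (-1) (xg n p) (xg n (S p))) by (eapply lip_RInt; eauto).
    change plus with Rplus.
    pose proof (cell g K (xg n p) (xg n (S p)) HK) as Hc.
    assert (Hd : xg n (S p) - xg n p = / INR n) by (unfold xg; rewrite S_INR; field; lra).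
    rewrite Hd in Hc. assert (0 < / INR n) by (apply Rinv_0_lt_compat; lra). specialize (Hc ltac:(lra) Hg).
    replace (sumN p (fun j => g (xg n (S j)) / INR n) + g (xg n (S p)) / INR n -
      (RInt g (-1) (xg n p) + RInt g (xg n p) (xg n (S p)))) with
      ((sumN p (fun j => g (xg n (S j)) / INR n) - RInt g (-1) (xg n p)) +
       (/ INR n * g (xg n (S p)) - RInt g (xg n p) (xg n (S p)))) by (field; lra).
    eapply Rle_trans. apply Rabs_triang. rewrite S_INR.
    replace ((INR p + 1) * K / (2 * INR n ^ 2)) with (INR p * K / (2 * INR n ^ 2) + K * (/ INR n)^2/2) by (field; lra).
    lra.
Qed.


Section Gam.
Variables (rc : R -> R) (Kr Kd : R).
Hypothesis HKr : 0 <= Kr.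
Hypothesis HKd : 0 <= Kd.
Hypothesis Hlip : Lip rc Kd.
Hypothesis Hbd : forall x, Rabs (rc x) <= Kr.

Let Rc t := RInt rc (-1) t.

Lemma Rc_lip : Lip Rc Kr.
Proof.
  intros x y. unfold Rc.
  assert (Hi : forall a b, ex_RInt rc a b) by (intros; eapply lip_RInt; eauto).
  assert (E : RInt rc (-1) x = RInt rc (-1) y + RInt rc y x).
  { symmetry. exact (RInt_Chasles (V:=R_CompleteNormedModule) rc (-1) y x (Hi _ _) (Hi _ _)). }
  rewrite E. replace (RInt rc (-1) y + RInt rc y x - RInt rc (-1) y) with (RInt rc y x : R) by lra.
  destruct (Rle_dec y x).
  - eapply Rle_trans. apply abs_RInt_le_const. auto. auto. intros; apply Hbd.
    rewrite Rabs_pos_eq by lra. lra.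
  - assert (E2 : RInt rc y x = - RInt rc x y).
    { symmetry. exact (opp_RInt_swap (V:=R_CompleteNormedModule) rc x y (Hi _ _)). }
    rewrite E2, Rabs_Ropp.
    eapply Rle_trans. apply abs_RInt_le_const. lra. auto. intros; apply Hbd.
    rewrite Rabs_left by lra. lra.
Qed.

Lemma gamma_bound (n N : nat) (d e : nat -> R) (E : R) :
  (1 <= n)%nat -> (N <= 2 * n)%nat -> 0 <= E ->
  (forall k, (k < N)%nat -> d k = rc (xg n (S k)) / INR n ^ 2 + e k) ->
  (forall k, (k < N)%nat -> Rabs (e k) <= E) ->
  sumN N (fun k => Rabs (sumN (S k) d)) <=
  RInt (fun t => Rabs (Rc t)) (-1) 1 + INR N * Kr / (2 * INR n ^ 2)
   + INR N * (INR N + 1) * Kd / (4 * INR n ^ 3) + INR N * (INR N + 1) * E / 2.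
Proof.
  intros Hn HN HE Hd He.
  assert (Hn' : 1 <= INR n) by (apply (le_INR 1); auto).
  assert (Hterm : forall k, (k < N)%nat -> Rabs (sumN (S k) d) <=
     Rabs (Rc (xg n (S k))) / INR n + INR (S k) * Kd / (2 * INR n ^ 3) + INR (S k) * E).
  { intros k Hk.
    rewrite (sumN_ext (S k) d (fun j => / INR n * (rc (xg n (S j)) / INR n) + e j)).
    2: { intros j Hj. rewrite Hd by lia. field. lra. }
    rewrite sumN_plus, sumN_scal.
    set (Q := sumN (S k) (fun j => rc (xg n (S j)) / INR n)).
    pose proof (riem rc Kd n (S k) HKd Hn Hlip) as HR. fold Q in HR. fold (Rc (xg n (S k))) in HR.
    replace (/ INR n * Q + sumN (S k) e) with (/ INR n * Rc (xg n (S k)) + / INR n * (Q - Rc (xg n (S k))) + sumN (S k) e) by ring.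
    eapply Rle_trans. eapply Rle_trans. apply Rabs_triang. apply Rplus_le_compat_r. apply Rabs_triang.
    rewrite !Rabs_mult, Rabs_inv, Rabs_pos_eq by lra.
    assert (Rabs (sumN (S k) e) <= INR (S k) * E).
    { eapply Rle_trans. apply sumN_abs. rewrite <- sumN_const. apply sumN_le. intros; apply He; lia. }
    assert (/ INR n * Rabs (Q - Rc (xg n (S k))) <= / INR n * (INR (S k) * Kd / (2 * INR n ^ 2))).
    { apply Rmult_le_compat_l. left; apply Rinv_0_lt_compat; lra. auto. }
    replace (INR (S k) * Kd / (2 * INR n ^ 3)) with (/ INR n * (INR (S k) * Kd / (2 * INR n ^ 2))) by (field; lra).
    unfold Rdiv at 1. lra. }
  eapply Rle_trans. apply sumN_le. apply Hterm.
  rewrite !sumN_plus.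
  rewrite (sumN_ext N (fun k => INR (S k) * Kd / (2 * INR n ^ 3)) (fun k => Kd / (2 * INR n ^ 3) * INR (S k))) by (intros; field; lra).
  rewrite (sumN_ext N (fun k => INR (S k) * E) (fun k => E * INR (S k))) by (intros; ring).
  rewrite !sumN_scal, sumN_id.
  assert (HA : Lip (fun t => Rabs (Rc t)) Kr) by (apply lip_abs, Rc_lip).
  pose proof (riem (fun t => Rabs (Rc t)) Kr n N HKr Hn HA) as HR.
  assert (HI : RInt (fun t => Rabs (Rc t)) (-1) (xg n N) <= RInt (fun t => Rabs (Rc t)) (-1) 1).
  { assert (Hi : forall a b, ex_RInt (fun t => Rabs (Rc t)) a b) by (intros; apply (lip_RInt _ Kr); auto).
    assert (EE : RInt (fun t => Rabs (Rc t)) (-1) 1 = RInt (fun t => Rabs (Rc t)) (-1) (xg n N) + RInt (fun t => Rabs (Rc t)) (xg n N) 1).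
    { symmetry. exact (RInt_Chasles (V:=R_CompleteNormedModule) _ (-1) (xg n N) 1 (Hi _ _) (Hi _ _)). }
    rewrite EE.
    assert (xg n N <= 1).
    { unfold xg. apply le_INR in HN. rewrite mult_INR in HN. simpl (INR 2) in HN.
      assert (INR N / INR n <= 2). { apply Rmult_le_reg_r with (INR n). lra.
        unfold Rdiv. rewrite Rmult_assoc, Rinv_l by lra. lra. } lra. }
    assert (0 <= RInt (fun t => Rabs (Rc t)) (xg n N) 1).
    { apply RInt_ge_0. auto. auto. intros; apply Rabs_pos. }
    lra. }
  assert (sumN N (fun k => Rabs (Rc (xg n (S k))) / INR n) <= RInt (fun t => Rabs (Rc t)) (-1) (xg n N) + INR N * Kr / (2 * INR n ^ 2)).
  { apply Rabs_le_between in HR. lra. }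
  assert (E1 : Kd / (2 * INR n ^ 3) * (INR N * (INR N + 1) / 2) = INR N * (INR N + 1) * Kd / (4 * INR n ^ 3)) by (field; lra).
  assert (E2 : E * (INR N * (INR N + 1) / 2) = INR N * (INR N + 1) * E / 2) by field.
  lra.
Qed.
End Gam.


Lemma deriv_cont_within D f x l : has_deriv_within D f x l -> continuous_within D f x.
Proof.
  intros H e He. destruct (H 1 Rlt_0_1) as [d [Hd Hy]].
  exists (Rmin d (e / (Rabs l + 1))). split.
  { apply Rmin_pos; auto. apply Rdiv_lt_0_compat; auto. pose proof (Rabs_pos l); lra. }
  intros y Dy Hxy. assert (Hl : 0 <= Rabs l) by apply Rabs_pos.
  assert (H1 : Rabs (y - x) < d) by (eapply Rlt_le_trans; [apply Hxy|apply Rmin_l]).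
  assert (H2 : Rabs (y - x) <= e / (Rabs l + 1)) by (left; eapply Rlt_le_trans; [apply Hxy|apply Rmin_r]).
  specialize (Hy y Dy H1).
  replace (f y - f x) with ((f y - f x - l * (y - x)) + l * (y - x)) by ring.
  eapply Rle_trans. apply Rabs_triang. rewrite Rabs_mult.
  apply Rle_trans with ((Rabs l + 1) * Rabs (y - x)). nra.
  apply Rle_trans with ((Rabs l + 1) * (e / (Rabs l + 1))). apply Rmult_le_compat_l; lra.
  right; field; lra.
Qed.

Lemma cw_cont g : (forall x, in_I x -> continuous_within in_I g x) ->
  forall z, continuity_pt (fun x => g (cl x)) z.
Proof.
  intros H z. unfold continuity_pt, continue_in, limit1_in, limit_in. simpl. unfold R_dist.
  intros e He. destruct (H (cl z) (cl_in z) (e/2)) as [d [Hd Hy]]. lra.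
  exists d. split; auto. intros y [_ Hyz].
  assert (Rabs (g (cl y) - g (cl z)) <= e / 2).
  { apply Hy. apply cl_in. eapply Rle_lt_trans. apply cl_lip. auto. }
  lra.
Qed.

Lemma cont_abs_pt f z : continuity_pt f z -> continuity_pt (fun x => Rabs (f x)) z.
Proof. intros H. apply (continuity_pt_comp f Rabs). auto. apply Rcontinuity_abs. Qed.

Lemma bound_exists g : (forall x, in_I x -> continuous_within in_I g x) ->
  exists K, 0 <= K /\ forall x, in_I x -> Rabs (g x) <= K.
Proof.
  intros H. destruct (continuity_ab_maj (fun x => Rabs (g (cl x))) (-1) 1) as [M [HM _]].
  lra. intros c _. apply cont_abs_pt, cw_cont; auto.
  exists (Rabs (g (cl M))). split. apply Rabs_pos. intros x Hx.
  rewrite <- (cl_id x Hx). apply HM. first [exact Hx | apply cl_in].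
Qed.

Lemma deriv_interior r dr z : (forall x, in_I x -> has_deriv_within in_I r x (dr x)) ->
  -1 < z < 1 -> is_derive (fun x => r (cl x)) z (dr z).
Proof.
  intros H Hz. apply is_derive_Reals. intros e He.
  destruct (H z ltac:(unfold in_I; lra) (e/2) ltac:(lra)) as [d [Hd Hy]].
  assert (Hp : 0 < Rmin d (Rmin (1 - z) (1 + z))) by (repeat apply Rmin_pos; lra).
  exists (mkposreal _ Hp). simpl. intros h Hh0 Hh.
  assert (Hh1 : Rabs h < d) by (eapply Rlt_le_trans; [apply Hh|apply Rmin_l]).
  assert (Hh2 : Rabs h < Rmin (1 - z) (1 + z)) by (eapply Rlt_le_trans; [apply Hh|apply Rmin_r]).
  assert (Hh3 : Rabs h < 1 - z) by (eapply Rlt_le_trans; [apply Hh2|apply Rmin_l]).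
  assert (Hh4 : Rabs h < 1 + z) by (eapply Rlt_le_trans; [apply Hh2|apply Rmin_r]).
  apply Rabs_def2 in Hh3. apply Rabs_def2 in Hh4.
  assert (Iz : in_I (z + h)) by (unfold in_I; lra).
  rewrite (cl_id (z+h) Iz), (cl_id z) by (unfold in_I; lra).
  assert (Habs : Rabs (z + h - z) < d) by (replace (z + h - z) with h by ring; auto).
  specialize (Hy (z+h) Iz Habs). replace (z + h - z) with h in Hy by ring.
  replace ((r (z + h) - r z) / h - dr z) with ((r (z + h) - r z - dr z * h) / h) by (field; auto).
  unfold Rdiv. rewrite Rabs_mult, Rabs_inv.
  assert (0 < Rabs h) by (apply Rabs_pos_lt; auto).
  apply Rle_lt_trans with (e / 2 * Rabs h * / Rabs h).
  apply Rmult_le_compat_r. left; apply Rinv_0_lt_compat; auto. auto.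
  rewrite Rmult_assoc, Rinv_r by lra. lra.
Qed.

Lemma rc_lip r dr Kd : C1_on_I r dr -> (forall x, in_I x -> Rabs (dr x) <= Kd) ->
  Lip (fun x => r (cl x)) Kd.
Proof.
  intros [Hd Hc] HK.
  assert (Hcont : forall z, continuity_pt (fun x => r (cl x)) z).
  { apply cw_cont. intros; eapply deriv_cont_within; eauto. }
  assert (Hab : forall a b, in_I a -> in_I b -> Rabs (r a - r b) <= Kd * Rabs (a - b)).
  { intros a b Ia Ib.
    destruct (MVT_gen (fun x => r (cl x)) b a dr) as [c [Hc1 Hc2]].
    - intros x Hx. apply deriv_interior; auto. unfold in_I in *.
      unfold Rmin, Rmax in Hx. destruct Rle_dec; lra.
    - intros; apply Hcont.
    - rewrite (cl_id a Ia), (cl_id b Ib) in Hc2. rewrite Hc2, Rabs_mult.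
      apply Rmult_le_compat_r. apply Rabs_pos. apply HK. unfold in_I in *.
      unfold Rmin, Rmax in Hc1. destruct Rle_dec; lra. }
  intros x y. eapply Rle_trans. apply Hab; apply cl_in.
  assert (0 <= Kd). { eapply Rle_trans. apply Rabs_pos. apply (HK 0). unfold in_I; lra. }
  apply Rmult_le_compat_l; auto. apply cl_lip.
Qed.

Lemma NR_eq r : RInt (fun t => Rabs (RInt r (-1) t)) (-1) 1 =
   RInt (fun t => Rabs (RInt (fun x => r (cl x)) (-1) t)) (-1) 1.
Proof.
  apply (RInt_ext (V:=R_CompleteNormedModule)). intros x Hx.
  rewrite Rmin_left in Hx by lra. rewrite Rmax_right in Hx by lra.
  f_equal. apply (RInt_ext (V:=R_CompleteNormedModule)). intros y Hy.
  rewrite Rmin_left in Hy by lra. rewrite Rmax_right in Hy by lra.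
  rewrite cl_id; auto. unfold in_I; lra.
Qed.

Lemma nat_above X : exists n0 : nat, X < INR n0.
Proof. destruct (archimed X) as [H1 _].
  destruct (Z_le_gt_dec 0 (up X)).
  - exists (Z.to_nat (up X)). rewrite INR_IZR_INZ, Z2Nat.id by lia. lra.
  - exists O. simpl. apply Rlt_trans with (IZR (up X)). lra. apply IZR_lt. lia.
Qed.


Lemma conv_n
  (L : nat -> Z) (a0 a1 : nat -> Z -> R) (r dr : R -> R)
  (alpha mu : R) (eps : nat -> Z -> R)
  (HL : forall n : nat, (1 <= n)%nat ->
          L n = (Z.of_nat n - 1)%Z \/ L n = Z.of_nat n)
  (Hsym0 : forall n : nat, (1 <= n)%nat -> forall l : Z,
          (1 - Z.of_nat n <= l <= L n)%Z ->
          a0 n l = a0 n (L n + 1 - Z.of_nat n - l)%Z)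
  (Hsym1 : forall n : nat, (1 <= n)%nat -> forall l : Z,
          (1 - Z.of_nat n <= l <= L n + 1)%Z ->
          a1 n l = a1 n (L n + 2 - Z.of_nat n - l)%Z)
  (Hconst0 : forall n : nat, (1 <= n)%nat ->
          sumZ (1 - Z.of_nat n) (L n) (a0 n) = 1)
  (Hconst1 : forall n : nat, (1 <= n)%nat ->
          sumZ (1 - Z.of_nat n) (L n + 1) (a1 n) = 1)
  (Hr : C1_on_I r dr)
  (Hmu : 0 < mu)
  (Hdiff : forall n : nat, (1 <= n)%nat -> forall j : Z,
          (1 - Z.of_nat n <= j <= L n)%Z ->
          a0 n j - a1 n j = r (IZR j / INR n) * / (INR n ^ 2) + eps n j)
  (Heps : forall n : nat, (1 <= n)%nat -> forall j : Z,
          (1 - Z.of_nat n <= j <= L n)%Z ->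
          Rabs (eps n j) <= mu * Rpower (INR n) (- alpha))
  (Kr Kd : R) (HKr : 0 <= Kr) (HKd : 0 <= Kd)
  (Hb : forall x, in_I x -> Rabs (r x) <= Kr)
  (Hbd : forall x, in_I x -> Rabs (dr x) <= Kd)
  (n : nat) (Hn : (1 <= n)%nat) :
  let N := INR (Z.to_nat (L n + Z.of_nat n)) in
  RInt (fun t => Rabs (RInt r (-1) t)) (-1) 1 + N * Kr / (2 * INR n ^ 2)
   + N * (N + 1) * Kd / (4 * INR n ^ 3) + N * (N + 1) * (mu * Rpower (INR n) (- alpha)) / 2 < 1 ->
  convergent_scheme (subdiv (1 - Z.of_nat n) (L n) (L n + 1) (a0 n) (a1 n)).
Proof.
  intros N Hlt.
  set (Nn := Z.to_nat (L n + Z.of_nat n)).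
  assert (HLn := HL n Hn).
  assert (HNz : Z.of_nat Nn = (L n + Z.of_nat n)%Z) by (unfold Nn; rewrite Z2Nat.id; lia).
  assert (Hn' : 1 <= INR n) by (apply (le_INR 1); auto).
  apply (scheme_conv (1 - Z.of_nat n) (L n) Nn (a0 n) (a1 n)).
  - lia.
  - lia.
  - rewrite <- (Hconst0 n Hn). rewrite sumZ_N. f_equal. unfold Nn. f_equal. lia.
  - rewrite <- (Hconst1 n Hn). rewrite sumZ_N. f_equal. unfold Nn. f_equal. lia.
  - intros k Hk. rewrite (Hsym0 n Hn (1 - Z.of_nat n + Z.of_nat k)%Z) by lia. f_equal. lia.
  - intros k Hk. rewrite (Hsym1 n Hn (1 - Z.of_nat n + Z.of_nat k)%Z) by lia. f_equal. lia.
  - set (rc := fun x => r (cl x)).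
    assert (Hrl : Lip rc Kd) by (apply (rc_lip r dr); auto).
    assert (Hrb : forall x, Rabs (rc x) <= Kr) by (intros; apply Hb, cl_in).
    assert (HE : 0 <= mu * Rpower (INR n) (- alpha)) by (unfold Rpower; pose proof (exp_pos (- alpha * ln (INR n))); nra).
    eapply Rle_lt_trans.
    apply (gamma_bound rc Kr Kd HKr HKd Hrl Hrb n Nn _ (fun k => eps n (1 - Z.of_nat n + Z.of_nat k)%Z) (mu * Rpower (INR n) (- alpha)) Hn).
    + lia.
    + apply HE.
    + intros k Hk. rewrite Hdiff by (auto; lia).
      assert (Ex : IZR (1 - Z.of_nat n + Z.of_nat k) / INR n = xg n (S k)).
      { unfold xg. rewrite !plus_IZR, minus_IZR, <- !INR_IZR_INZ, S_INR. field. lra. }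
      rewrite Ex. unfold rc. rewrite (cl_id (xg n (S k))). unfold Rdiv. reflexivity.
      unfold in_I, xg. assert (INR (S k) <= 2 * INR n).
      { replace 2 with (INR 2) by reflexivity. rewrite <- mult_INR. apply le_INR. lia. }
      assert (0 <= INR (S k) / INR n <= 2).
      { split. apply Rdiv_le_0_compat; [apply pos_INR|lra].
        apply Rmult_le_reg_r with (INR n). lra. unfold Rdiv. rewrite Rmult_assoc, Rinv_l by lra. lra. }
      lra.
    + intros k Hk. apply Heps; auto. lia.
    + unfold rc. rewrite <- NR_eq. fold N. exact Hlt.
Qed.


Lemma quad_from_root c B D n : 0 < c -> 0 <= D -> (sqrt D + B) / (2 * c) < n ->
  D < (2 * c * n - B) ^ 2 /\ 0 < 2 * c * n - B.
Proof. intros Hc HD H.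
  assert (sqrt D + B < 2 * c * n).
  { apply Rmult_lt_compat_r with (r := 2 * c) in H; [|lra].
    unfold Rdiv in H. rewrite Rmult_assoc, Rinv_l, Rmult_1_r in H by lra. lra. }
  pose proof (sqrt_pos D). pose proof (sqrt_sqrt D HD).
  split; nra.
Qed.

Lemma arith_a NR nr ndr mu n : NR < 1 -> 0 <= nr -> 0 <= ndr -> 0 < mu -> 1 <= n ->
  let B := nr + 2 * (mu + ndr) in
  0 <= B ^ 2 + 4 * (NR - 1) * (mu + ndr) ->
  (sqrt (B ^ 2 + 4 * (NR - 1) * (mu + ndr)) + B) / (2 * (1 - NR)) < n ->
  NR + (2 * n - 1) * nr / (2 * n ^ 2) + (2 * n - 1) * (2 * n - 1 + 1) * ndr / (4 * n ^ 3)
     + (2 * n - 1) * (2 * n - 1 + 1) * (mu * / n ^ 3) / 2 < 1.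
Proof.
  intros HNR Hr Hd Hm Hn B HD H.
  destruct (quad_from_root (1 - NR) B _ n ltac:(lra) HD H) as [Q1 Q2].
  assert (Q : (1 - NR) * n ^ 2 - B * n + (mu + ndr) > 0).
  { assert (4 * (1 - NR) * ((1 - NR) * n ^ 2 - B * n + (mu + ndr)) > 0) by (unfold B in *; nra).
    nra. }
  assert (T : (2 * n - 1) * nr / (2 * n ^ 2) + (2 * n - 1) * (2 * n - 1 + 1) * ndr / (4 * n ^ 3)
     + (2 * n - 1) * (2 * n - 1 + 1) * (mu * / n ^ 3) / 2 =
     ((2 * n - 1) * nr / 2 + (2 * n - 1) * ndr / 2 + (2 * n - 1) * mu) / n ^ 2) by (field; lra).
  assert (U : (2 * n - 1) * nr / 2 + (2 * n - 1) * ndr / 2 + (2 * n - 1) * mu < (1 - NR) * n ^ 2).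
  { unfold B in Q. nra. }
  assert (V : ((2 * n - 1) * nr / 2 + (2 * n - 1) * ndr / 2 + (2 * n - 1) * mu) / n ^ 2 < 1 - NR).
  { apply Rmult_lt_reg_r with (n ^ 2). nra. unfold Rdiv. rewrite Rmult_assoc, Rinv_l by nra. lra. }
  lra.
Qed.

Lemma arith_b NR nr ndr mu n : NR < 1 -> 0 <= nr -> 0 <= ndr -> 0 < mu -> 1 <= n ->
  let B := nr + 2 * (mu + ndr) in
  (sqrt (B ^ 2 + 4 * (1 - NR) * mu) + B) / (2 * (1 - NR)) < n ->
  NR + (2 * n) * nr / (2 * n ^ 2) + (2 * n) * (2 * n + 1) * ndr / (4 * n ^ 3)
     + (2 * n) * (2 * n + 1) * (mu * / n ^ 3) / 2 < 1.
Proof.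
  intros HNR Hr Hd Hm Hn B H.
  assert (HD : 0 <= B ^ 2 + 4 * (1 - NR) * mu) by nra.
  destruct (quad_from_root (1 - NR) B _ n ltac:(lra) HD H) as [Q1 Q2].
  assert (Q : (1 - NR) * n ^ 2 - B * n - mu > 0).
  { assert (4 * (1 - NR) * ((1 - NR) * n ^ 2 - B * n - mu) > 0) by (unfold B in *; nra).
    nra. }
  assert (T : (2 * n) * nr / (2 * n ^ 2) + (2 * n) * (2 * n + 1) * ndr / (4 * n ^ 3)
     + (2 * n) * (2 * n + 1) * (mu * / n ^ 3) / 2 =
     (n * nr + (2 * n + 1) * ndr / 2 + (2 * n + 1) * mu) / n ^ 2) by (field; lra).
  assert (U : n * nr + (2 * n + 1) * ndr / 2 + (2 * n + 1) * mu < (1 - NR) * n ^ 2).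
  { unfold B in Q. nra. }
  assert (V : (n * nr + (2 * n + 1) * ndr / 2 + (2 * n + 1) * mu) / n ^ 2 < 1 - NR).
  { apply Rmult_lt_reg_r with (n ^ 2). nra. unfold Rdiv. rewrite Rmult_assoc, Rinv_l by nra. lra. }
  lra.
Qed.

Lemma arith1 n N Kr Kd E : 1 <= n -> 0 <= N <= 2 * n -> 0 <= Kr -> 0 <= Kd -> 0 <= E ->
  N * Kr / (2 * n ^ 2) + N * (N + 1) * Kd / (4 * n ^ 3) + N * (N + 1) * E / 2
   <= (Kr + 2 * Kd) / n + 3 * (n ^ 2 * E).
Proof.
  intros Hn HN Hr Hd HE.
  set (u := / n). assert (Hu : n * u = 1) by (unfold u; field; lra).
  assert (Hu0 : 0 < u) by (unfold u; apply Rinv_0_lt_compat; lra).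
  assert (Hu1 : u <= 1) by nra.
  replace (N * Kr / (2 * n ^ 2)) with ((N * u) * u * Kr / 2) by (unfold u; field; lra).
  replace (N * (N + 1) * Kd / (4 * n ^ 3)) with ((N * u) * ((N + 1) * u) * (u * Kd) / 4) by (unfold u; field; lra).
  replace ((Kr + 2 * Kd) / n) with (u * Kr + 2 * (u * Kd)) by (unfold u; field; lra).
  assert (A1 : N * u <= 2) by nra.
  assert (A2 : (N + 1) * u <= 3) by nra.
  assert (A0 : 0 <= N * u) by nra.
  assert (A3 : 0 <= (N + 1) * u) by nra.
  assert (B1 : (N * u) * u * Kr / 2 <= u * Kr).
  { assert ((N*u) * (u * Kr) <= 2 * (u * Kr)) by (apply Rmult_le_compat_r; nra). nra. }
  assert (B2 : (N * u) * ((N + 1) * u) <= 6) by nra.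
  assert (B3 : (N * u) * ((N + 1) * u) * (u * Kd) / 4 <= 2 * (u * Kd)).
  { assert ((N * u) * ((N + 1) * u) * (u * Kd) <= 6 * (u * Kd)) by (apply Rmult_le_compat_r; nra). nra. }
  assert (B4 : N * (N + 1) <= 6 * n ^ 2) by nra.
  assert (B5 : N * (N + 1) * E <= 6 * n ^ 2 * E) by (apply Rmult_le_compat_r; nra).
  lra.
Qed.

Lemma rpow_dec x y e : 0 < y < x -> e < 0 -> Rpower x e < Rpower y e.
Proof. intros H He. unfold Rpower. apply exp_increasing.
  assert (ln y < ln x) by (apply ln_increasing; lra). nra. Qed.


Theorem theorem5p4
  (L : nat -> Z) (a0 a1 : nat -> Z -> R) (r dr : R -> R)
  (alpha mu : R) (eps : nat -> Z -> R)
  (HL : forall n : nat, (1 <= n)%nat ->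
          L n = (Z.of_nat n - 1)%Z \/ L n = Z.of_nat n)
  (Hsym0 : forall n : nat, (1 <= n)%nat -> forall l : Z,
          (1 - Z.of_nat n <= l <= L n)%Z ->
          a0 n l = a0 n (L n + 1 - Z.of_nat n - l)%Z)
  (Hsym1 : forall n : nat, (1 <= n)%nat -> forall l : Z,
          (1 - Z.of_nat n <= l <= L n + 1)%Z ->
          a1 n l = a1 n (L n + 2 - Z.of_nat n - l)%Z)
  (Hconst0 : forall n : nat, (1 <= n)%nat ->
          sumZ (1 - Z.of_nat n) (L n) (a0 n) = 1)
  (Hconst1 : forall n : nat, (1 <= n)%nat ->
          sumZ (1 - Z.of_nat n) (L n + 1) (a1 n) = 1)
  (Hr : C1_on_I r dr)
  (Halpha : 2 < alpha) (Hmu : 0 < mu)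
  (Hdiff : forall n : nat, (1 <= n)%nat -> forall j : Z,
          (1 - Z.of_nat n <= j <= L n)%Z ->
          a0 n j - a1 n j = r (IZR j / INR n) * / (INR n ^ 2) + eps n j)
  (Heps : forall n : nat, (1 <= n)%nat -> forall j : Z,
          (1 - Z.of_nat n <= j <= L n)%Z ->
          Rabs (eps n j) <= mu * Rpower (INR n) (- alpha))
  (HR1 : RInt (fun t => Rabs (RInt r (-1) t)) (-1) 1 < 1) :
  (exists n0 : nat, forall n : nat, (n0 < n)%nat ->
     convergent_scheme
       (subdiv (1 - Z.of_nat n) (L n) (L n + 1) (a0 n) (a1 n)))
  /\
  (alpha = 3 ->
   forall nr ndr : R, is_max_abs_on_I r nr -> is_max_abs_on_I dr ndr ->
   let NR := RInt (fun t => Rabs (RInt r (-1) t)) (-1) 1 in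
   let B := nr + 2 * (mu + ndr) in
   forall n : nat, (1 <= n)%nat ->
     ((L n = (Z.of_nat n - 1)%Z ->
       0 <= B ^ 2 + 4 * (NR - 1) * (mu + ndr) ->
       (sqrt (B ^ 2 + 4 * (NR - 1) * (mu + ndr)) + B) / (2 * (1 - NR)) < INR n ->
       convergent_scheme
         (subdiv (1 - Z.of_nat n) (L n) (L n + 1) (a0 n) (a1 n)))
      /\
      (L n = Z.of_nat n ->
       (sqrt (B ^ 2 + 4 * (1 - NR) * mu) + B) / (2 * (1 - NR)) < INR n ->
       convergent_scheme
         (subdiv (1 - Z.of_nat n) (L n) (L n + 1) (a0 n) (a1 n))))).
Proof.
  pose proof (conv_n L a0 a1 r dr alpha mu eps HL Hsym0 Hsym1 Hconst0 Hconst1 Hr Hmu Hdiff Heps) as CN.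
  set (NR := RInt (fun t => Rabs (RInt r (-1) t)) (-1) 1) in *.
  assert (HNz : forall n, (1 <= n)%nat -> (0 <= L n + Z.of_nat n)%Z /\ (L n + Z.of_nat n <= 2 * Z.of_nat n)%Z).
  { intros n Hn. destruct (HL n Hn); lia. }
  split.
  - destruct Hr as [Hd Hc].
    destruct (bound_exists r) as [Kr [HKr Hb]].
    { intros; eapply deriv_cont_within; eauto. }
    destruct (bound_exists dr) as [Kd [HKd Hbd]]. auto.
    set (c := (1 - NR) / 2).
    assert (Hc0 : 0 < c) by (unfold c; lra).
    set (t := c / (3 * mu)).
    assert (Ht : 0 < t) by (unfold t; apply Rdiv_lt_0_compat; lra).
    set (y := Rpower t (1 / (2 - alpha))).
    assert (Hy : 0 < y) by (unfold y, Rpower; apply exp_pos).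
    destruct (nat_above (Rmax 1 (Rmax ((Kr + 2 * Kd) / c) y))) as [n0 Hn0].
    exists n0. intros n Hn.
    assert (Hnn : INR n0 < INR n) by (apply lt_INR; auto).
    assert (H1 : 1 < INR n) by (pose proof (Rmax_l 1 (Rmax ((Kr + 2 * Kd) / c) y)); lra).
    assert (Hn1 : (1 <= n)%nat) by (apply INR_le; simpl; lra).
    apply (CN Kr Kd HKr HKd Hb Hbd n Hn1).
    set (N := INR (Z.to_nat (L n + Z.of_nat n))).
    assert (HN : 0 <= N <= 2 * INR n).
    { unfold N. split. apply pos_INR. rewrite INR_IZR_INZ, Z2Nat.id by (apply HNz; auto).
      rewrite INR_IZR_INZ. rewrite <- mult_IZR. apply IZR_le. apply HNz; auto. }
    assert (HE : 0 <= mu * Rpower (INR n) (- alpha)) by (unfold Rpower; pose proof (exp_pos (- alpha * ln (INR n))); nra).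
    pose proof (arith1 (INR n) N Kr Kd _ ltac:(lra) HN HKr HKd HE) as A.
    assert (P : INR n ^ 2 * (mu * Rpower (INR n) (- alpha)) = mu * Rpower (INR n) (2 - alpha)).
    { replace (2 - alpha) with (INR 2 + - alpha) by (simpl; ring). rewrite Rpower_plus, Rpower_pow by lra. ring. }
    assert (P2 : Rpower (INR n) (2 - alpha) < t).
    { apply Rlt_le_trans with (Rpower y (2 - alpha)).
      apply rpow_dec. split; auto. pose proof (Rmax_r 1 (Rmax ((Kr + 2 * Kd) / c) y)).
      pose proof (Rmax_r ((Kr + 2 * Kd) / c) y). lra. lra.
      unfold y. rewrite Rpower_mult. replace (1 / (2 - alpha) * (2 - alpha)) with 1 by (field; lra).
      rewrite Rpower_1; lra. }
    assert (P3 : (Kr + 2 * Kd) / INR n < c).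
    { pose proof (Rmax_r 1 (Rmax ((Kr + 2 * Kd) / c) y)).
      pose proof (Rmax_l ((Kr + 2 * Kd) / c) y).
      assert ((Kr + 2 * Kd) / c < INR n) by lra.
      apply Rmult_lt_reg_r with (INR n). lra. unfold Rdiv. rewrite Rmult_assoc, Rinv_l by lra.
      apply Rmult_lt_compat_r with (r := c) in H2; auto. unfold Rdiv in H2.
      rewrite Rmult_assoc, Rinv_l, Rmult_1_r in H2 by lra. lra. }
    assert (P4 : 3 * (mu * Rpower (INR n) (2 - alpha)) < c).
    { unfold t in P2. apply Rmult_lt_compat_l with (r := 3 * mu) in P2; [|lra].
      replace (3 * mu * (c / (3 * mu))) with c in P2 by (field; lra). lra. }
    rewrite P in A. unfold c in P3, P4. lra.
  - intros Ha nr ndr [_ Hnr] [_ Hndr] NR' B n Hn. subst alpha.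
    assert (Hn' : 1 <= INR n) by (apply (le_INR 1); auto).
    assert (Hnr0 : 0 <= nr) by (eapply Rle_trans; [apply Rabs_pos|apply (Hnr 0)]; unfold in_I; lra).
    assert (Hndr0 : 0 <= ndr) by (eapply Rle_trans; [apply Rabs_pos|apply (Hndr 0)]; unfold in_I; lra).
    assert (Rp : Rpower (INR n) (Ropp 3) = / INR n ^ 3).
    { rewrite Rpower_Ropp. replace 3 with (INR 3) by (simpl; ring). rewrite Rpower_pow by lra. reflexivity. }
    split.
    + intros HLn HD Hlt. apply (CN nr ndr Hnr0 Hndr0 Hnr Hndr n Hn).
      assert (EN : INR (Z.to_nat (L n + Z.of_nat n)) = 2 * INR n - 1).
      { rewrite INR_IZR_INZ, Z2Nat.id by (apply HNz; auto). rewrite HLn.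
        rewrite !INR_IZR_INZ. rewrite <- mult_IZR, <- minus_IZR. f_equal. lia. }
      rewrite EN, Rp. apply (arith_a NR nr ndr mu (INR n)); auto.
    + intros HLn Hlt. apply (CN nr ndr Hnr0 Hndr0 Hnr Hndr n Hn).
      assert (EN : INR (Z.to_nat (L n + Z.of_nat n)) = 2 * INR n).
      { rewrite INR_IZR_INZ, Z2Nat.id by (apply HNz; auto). rewrite HLn.
        rewrite !INR_IZR_INZ. rewrite <- mult_IZR. f_equal. lia. }
      rewrite EN, Rp. replace (2 * INR n + 1) with (2 * INR n + 1) by ring.
      apply (arith_b NR nr ndr mu (INR n)); auto.
Qed.
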